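(* For all integers $q\ge3$ and $n\ge3$ there exists a pyramid $PY_q^n$ in at least one of the spaces of constant curvature $\mathbb{S}^3$, $\mathbb{R}^3$, $\mathbb{H}^3$ (not necessarily in all of these spaces, and not necessarily of all sizes).
   Context: A generalized pyramid is a polyhedron with a distinguished $q$-gonal face, called the base, and $q$ possibly infinite triangles, called sides, that are adjacent in pairs and to the base (so the apex may be ideal or hyperideal in $\mathbb{H}^3$). $PY_q^n$ denotes a generalized pyramid such that the base is a regular $q$-gon, the pyramid is invariant under the rotation of angle $2\pi/q$ about the axis through the center of and perpendicular to the base, and the dihedral angle between adjacent sides is $2\pi/n$. *)

(* Defs.v *)
From Stdlib Require Import Reals Lra Lia.
Open Scope R_scope.

(** Points are represented in an affine chart R^3, viewed as the points
    (x,1) of R^4 equipped with the bilinear form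
        B_k((x,t),(y,s)) = x.y + k*t*s,   k = +1, 0, -1.
    - Spherical  (k = +1): gnomonic chart of the open hemisphere of S^3
      {X in R^4 : |X| = 1, X_4 > 0}; every point of R^3 is a point of S^3.
    - Euclidean  (k =  0): R^3 itself.
    - Hyperbolic (k = -1): Beltrami-Klein model; the points of H^3 are those
      of the open unit ball; points on the unit sphere are ideal, points
      outside are hyperideal.
    In each case a plane {x | n.x = d} has (outward, for the half-space
    n.x <= d) normal vector (n, -d) in R^4, and the interior dihedral angle
    between two half-spaces with outward normals N1, N2 is
        acos ( - B(N1,N2) / sqrt (B(N1,N1) B(N2,N2)) ). *)

Inductive geom : Type := Spherical | Euclidean | Hyperbolic.

Definition curv (g : geom) : R :=
  match g with Spherical => 1 | Euclidean => 0 | Hyperbolic => -1 end.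

Definition pt : Type := (R * R * R)%type.

Definition px (p : pt) : R := fst (fst p).
Definition py (p : pt) : R := snd (fst p).
Definition pz (p : pt) : R := snd p.

Definition dot (u v : pt) : R := px u * px v + py u * py v + pz u * pz v.
Definition vsub (u v : pt) : pt := (px u - px v, py u - py v, pz u - pz v).
Definition vadd (u v : pt) : pt := (px u + px v, py u + py v, pz u + pz v).
Definition vscale (c : R) (u : pt) : pt := (c * px u, c * py u, c * pz u).
Definition cross (u v : pt) : pt :=
  (py u * pz v - pz u * py v, pz u * px v - px u * pz v, px u * py v - py u * px v).

Definition in_model (g : geom) (x : pt) : Prop :=
  match g with
  | Hyperbolic => dot x x < 1
  | _ => True
  end.

(** Rotation by angle 2*pi*k/q about the z-axis (an isometry in all three models). *)
Definition rot (q k : nat) (x : pt) : pt :=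
  let phi := 2 * PI * INR k / INR q in
  (px x * cos phi - py x * sin phi, px x * sin phi + py x * cos phi, pz x).

Definition basev (q : nat) (v0 : pt) (k : nat) : pt := rot q k v0.

Definition pyr_vertex (q : nat) (v0 a : pt) (i : nat) : pt :=
  if (i <? q)%nat then basev q v0 i else a.

Fixpoint sumR (m : nat) (f : nat -> R) : R :=
  match m with O => 0 | S m' => sumR m' f + f m' end.

Fixpoint sumV (m : nat) (f : nat -> pt) : pt :=
  match m with O => (0, 0, 0) | S m' => vadd (sumV m' f) (f m') end.

Definition conv (m : nat) (p : nat -> pt) (x : pt) : Prop :=
  exists w : nat -> R,
    (forall i, (i < m)%nat -> 0 <= w i) /\
    sumR m w = 1 /\
    x = sumV m (fun i => vscale (w i) (p i)).

(** In H^3 the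
    apex may be ideal or hyperideal, and then the sides are infinite triangles. *)
Definition pyramid_set (g : geom) (q : nat) (v0 a : pt) (x : pt) : Prop :=
  in_model g x /\ conv (S q) (pyr_vertex q v0 a) x.

(** Centroid of the vertices (an interior point used to orient normals). *)
Definition centroid (q : nat) (v0 a : pt) : pt :=
  vscale (/ INR (S q)) (sumV (S q) (pyr_vertex q v0 a)).

Definition side_normal (q : nat) (v0 a : pt) (k : nat) : pt * R :=
  let nv := cross (vsub (basev q v0 k) a) (vsub (basev q v0 (S k)) a) in
  let d := dot nv a in
  let s := if Rlt_dec (dot nv (centroid q v0 a)) d then 1 else -1 in
  (vscale s nv, - s * d).

Definition formB (g : geom) (N1 N2 : pt * R) : R :=
  dot (fst N1) (fst N2) + curv g * snd N1 * snd N2.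

Definition dihedral (g : geom) (N1 N2 : pt * R) : R :=
  acos (- formB g N1 N2 / sqrt (formB g N1 N1 * formB g N2 N2)).

Definition is_PY (g : geom) (q n : nat) (v0 a : pt) : Prop :=
  (* the base is a genuine regular q-gon of the space *)
  in_model g v0 /\ (px v0 <> 0 \/ py v0 <> 0) /\
  (* the apex is not in the base plane; it is a point of the space,
     except in H^3 where it may be ideal or hyperideal *)
  pz a <> pz v0 /\
  (g <> Hyperbolic -> in_model g a) /\
  (forall x, pyramid_set g q v0 a x <-> pyramid_set g q v0 a (rot q 1 x)) /\
  (forall k, (k < q)%nat ->
     dihedral g (side_normal q v0 a k) (side_normal q v0 a (S k)) = 2 * PI / INR n).

(* Main.v *)
Require Import Defs.
From Stdlib Require Import Reals Lra Lia Psatz.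
Open Scope R_scope.

Lemma sc1 x : sin x * sin x + cos x * cos x = 1.
Proof. pose proof (sin2_cos2 x) as H. unfold Rsqr in H. exact H. Qed.

Lemma pt_eq (x y : pt) : px x = px y -> py x = py y -> pz x = pz y -> x = y.
Proof. destruct x as [[x1 x2] x3], y as [[y1 y2] y3]; unfold px,py,pz; cbn; intros; subst; auto. Qed.

Lemma sumR_ext m f g : (forall i, (i < m)%nat -> f i = g i) -> sumR m f = sumR m g.
Proof. induction m; cbn [sumR]; intros; auto. rewrite IHm by (intros; apply H; lia). rewrite H by lia. auto. Qed.

Lemma sumR_shift m f : sumR (S m) f = f O + sumR m (fun i => f (S i)).
Proof. induction m. cbn [sumR]. ring. cbn [sumR] in *. rewrite IHm. ring. Qed.

Definition Lin (f : pt -> R) := (forall c u, f (vscale c u) = c * f u) /\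
  (forall u v, f (vadd u v) = f u + f v) /\ f (0,0,0) = 0.

Lemma lin_sum f m w p : Lin f ->
  f (sumV m (fun i => vscale (w i) (p i))) = sumR m (fun i => w i * f (p i)).
Proof. intros [H1 [H2 H3]]. induction m; cbn [sumV sumR]. auto. rewrite H2, H1, IHm. auto. Qed.

Lemma Lin_px : Lin px. Proof. repeat split; intros; unfold px, vscale, vadd; cbn; ring. Qed.
Lemma Lin_py : Lin py. Proof. repeat split; intros; unfold py, vscale, vadd; cbn; ring. Qed.
Lemma Lin_pz : Lin pz. Proof. repeat split; intros; unfold pz, vscale, vadd; cbn; ring. Qed.
Lemma Lin_rx q k : Lin (fun u => px (rot q k u)).
Proof. repeat split; intros; repeat match goal with p : pt |- _ => destruct p as [[? ?] ?] end; unfold rot, px, py, pz, vscale, vadd; cbn; ring. Qed.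
Lemma Lin_ry q k : Lin (fun u => py (rot q k u)).
Proof. repeat split; intros; repeat match goal with p : pt |- _ => destruct p as [[? ?] ?] end; unfold rot, px, py, pz, vscale, vadd; cbn; ring. Qed.
Lemma Lin_rz q k : Lin (fun u => pz (rot q k u)).
Proof. repeat split; intros; repeat match goal with p : pt |- _ => destruct p as [[? ?] ?] end; unfold rot, px, py, pz, vscale, vadd; cbn; ring. Qed.

Lemma sum_cos_tel b m : 2 * sin b * sumR m (fun i => cos (2*b*INR i)) = sin ((2*INR m - 1)*b) + sin b.
Proof. induction m.
- cbn [sumR INR]. replace ((2*0-1)*b) with (-b) by ring. rewrite sin_neg. ring.
- cbn [sumR]. rewrite Rmult_plus_distr_l, IHm. rewrite S_INR.
  replace ((2*INR m - 1)*b) with (2*b*INR m - b) by ring.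
  replace ((2*(INR m + 1) - 1)*b) with (2*b*INR m + b) by ring.
  rewrite sin_plus, sin_minus. ring. Qed.

Lemma sum_sin_tel b m : 2 * sin b * sumR m (fun i => sin (2*b*INR i)) = cos b - cos ((2*INR m - 1)*b).
Proof. induction m.
- cbn [sumR INR]. replace ((2*0-1)*b) with (-b) by ring. rewrite cos_neg. ring.
- cbn [sumR]. rewrite Rmult_plus_distr_l, IHm. rewrite S_INR.
  replace ((2*INR m - 1)*b) with (2*b*INR m - b) by ring.
  replace ((2*(INR m + 1) - 1)*b) with (2*b*INR m + b) by ring.
  rewrite cos_plus, cos_minus. ring. Qed.

Lemma INR_q_gt q : (3 <= q)%nat -> 3 <= INR q.
Proof. intros. replace 3 with (INR 3) by (cbn; ring). apply le_INR; auto. Qed.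

Lemma sin_b_pos q : (3 <= q)%nat -> 0 < sin (PI / INR q).
Proof. intros Hq. pose proof (INR_q_gt q Hq). pose proof PI_RGT_0. apply sin_gt_0.
  apply Rdiv_lt_0_compat; lra.
  apply Rmult_lt_reg_r with (INR q). lra. unfold Rdiv. rewrite Rmult_assoc, Rinv_l by lra. nra. Qed.

Lemma sum_cos0 q : (3 <= q)%nat -> sumR q (fun i => cos (2*PI*INR i/INR q)) = 0.
Proof. intros Hq. pose proof (INR_q_gt q Hq). set (b := PI / INR q).
  pose proof (sin_b_pos q Hq) as Hs. fold b in Hs.
  rewrite (sumR_ext _ _ (fun i => cos (2*b*INR i))) by (intros; unfold b; f_equal; field; lra).
  apply Rmult_eq_reg_l with (2 * sin b); [|lra]. rewrite sum_cos_tel.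
  replace ((2*INR q - 1)*b) with (2*PI - b) by (unfold b; field; lra).
  rewrite sin_minus, sin_2PI, cos_2PI. ring. Qed.

Lemma sum_sin0 q : (3 <= q)%nat -> sumR q (fun i => sin (2*PI*INR i/INR q)) = 0.
Proof. intros Hq. pose proof (INR_q_gt q Hq). set (b := PI / INR q).
  pose proof (sin_b_pos q Hq) as Hs. fold b in Hs.
  rewrite (sumR_ext _ _ (fun i => sin (2*b*INR i))) by (intros; unfold b; f_equal; field; lra).
  apply Rmult_eq_reg_l with (2 * sin b); [|lra]. rewrite sum_sin_tel.
  replace ((2*INR q - 1)*b) with (2*PI - b) by (unfold b; field; lra).
  rewrite cos_minus, sin_2PI, cos_2PI. ring. Qed.

Lemma rot_comp q k x : (0 < q)%nat -> rot q 1 (rot q k x) = rot q (S k) x.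
Proof. intros Hq. assert (INR q <> 0) by (apply not_0_INR; lia).
  destruct x as [[x1 x2] x3]. unfold rot, px, py, pz; cbn [fst snd].
  replace (2 * PI * INR (S k) / INR q) with (2*PI*INR k/INR q + 2*PI*INR 1/INR q)
    by (rewrite (S_INR k); cbn [INR]; field; auto).
  rewrite cos_plus, sin_plus. apply pt_eq; unfold px, py, pz; cbn [fst snd]; ring. Qed.

Lemma rot_comp' q k x : (0 < q)%nat -> rot q k (rot q 1 x) = rot q (S k) x.
Proof. intros Hq. assert (INR q <> 0) by (apply not_0_INR; lia).
  destruct x as [[x1 x2] x3]. unfold rot, px, py, pz; cbn [fst snd].
  replace (2 * PI * INR (S k) / INR q) with (2*PI*INR k/INR q + 2*PI*INR 1/INR q)
    by (rewrite (S_INR k); cbn [INR]; field; auto).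
  rewrite cos_plus, sin_plus. apply pt_eq; unfold px, py, pz; cbn [fst snd]; ring. Qed.

Lemma rot_full q x : (0 < q)%nat -> rot q q x = x.
Proof. intros Hq. assert (INR q <> 0) by (apply not_0_INR; lia).
  destruct x as [[x1 x2] x3]. unfold rot, px, py, pz; cbn [fst snd].
  replace (2 * PI * INR q / INR q) with (2*PI) by (field; auto).
  rewrite cos_2PI, sin_2PI. apply pt_eq; unfold px, py, pz; cbn [fst snd]; ring. Qed.

Lemma rot_zero q x : rot q 0 x = x.
Proof. destruct x as [[x1 x2] x3]. unfold rot, px, py, pz; cbn [fst snd].
  replace (2 * PI * INR 0 / INR q) with 0 by (cbn [INR]; unfold Rdiv; ring).
  rewrite cos_0, sin_0. apply pt_eq; unfold px, py, pz; cbn [fst snd]; ring. Qed.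

Lemma rot_dot q k x : dot (rot q k x) (rot q k x) = dot x x.
Proof. destruct x as [[x1 x2] x3]. unfold dot, rot, px, py, pz; cbn [fst snd].
  set (t := 2 * PI * INR k / INR q). pose proof (sc1 t).
  transitivity ((x1*x1+x2*x2)*(sin t * sin t + cos t * cos t) + x3*x3); [ring|].
  rewrite H. ring. Qed.

Lemma rot_axis q k a : px a = 0 -> py a = 0 -> rot q k a = a.
Proof. destruct a as [[a1 a2] a3]. unfold rot, px, py, pz; cbn [fst snd]. intros -> ->.
  apply pt_eq; unfold px, py, pz; cbn [fst snd]; ring. Qed.


Lemma reindex q' (w F G : nat -> R) :
  (forall i, (i < q')%nat -> G i = F (S i)) -> G q' = F 0%nat -> G (S q') = F (S q') ->
  sumR (S (S q')) (fun i => w i * G i) =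
  sumR (S (S q')) (fun i => (if Nat.eqb i 0 then w q' else if Nat.ltb i (S q') then w (pred i) else w i) * F i).
Proof. intros H1 H2 H3.
  set (w' := fun i => if Nat.eqb i 0 then w q' else if Nat.ltb i (S q') then w (pred i) else w i).
  change (sumR q' (fun i => w i * G i) + w q' * G q' + w (S q') * G (S q') =
          sumR (S q') (fun i => w' i * F i) + w' (S q') * F (S q')).
  rewrite (sumR_shift q' (fun i => w' i * F i)). cbn beta.
  assert (w' (S q') = w (S q')) as -> by (unfold w'; cbn [Nat.eqb]; rewrite Nat.ltb_irrefl; auto).
  assert (w' 0%nat = w q') as -> by reflexivity.
  rewrite (sumR_ext q' (fun i => w i * G i) (fun i => w' (S i) * F (S i))).
  rewrite H2, H3. ring.
  intros i Hi. unfold w'. cbn [Nat.eqb]. destruct (Nat.ltb_spec (S i) (S q')); [|lia]. cbn. rewrite H1; auto. Qed.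

Lemma fwd q v0 a x : (0 < q)%nat -> px a = 0 -> py a = 0 ->
  pyramid_set Hyperbolic q v0 a x -> pyramid_set Hyperbolic q v0 a (rot q 1 x).
Proof.
  intros Hq Ha1 Ha2 [Hm [w [Hw [Hs Hx]]]]. split.
  { unfold in_model in *. rewrite rot_dot. auto. }
  destruct q as [|q']; [lia|].
  set (p := pyr_vertex (S q') v0 a).
  assert (P1 : forall i, (i < q')%nat -> rot (S q') 1 (p i) = p (S i)).
  { intros i Hi. unfold p, pyr_vertex.
    destruct (Nat.ltb_spec i (S q')); [|lia]. destruct (Nat.ltb_spec (S i) (S q')); [|lia].
    unfold basev. apply rot_comp; lia. }
  assert (P2 : rot (S q') 1 (p q') = p 0%nat).
  { unfold p, pyr_vertex.
    destruct (Nat.ltb_spec q' (S q')); [|lia]. destruct (Nat.ltb_spec 0 (S q')); [|lia].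
    unfold basev. rewrite rot_comp, rot_full, rot_zero; auto; lia. }
  assert (P3 : rot (S q') 1 (p (S q')) = p (S q')).
  { unfold p, pyr_vertex. destruct (Nat.ltb_spec (S q') (S q')); [lia|].
    apply rot_axis; auto. }
  exists (fun i => if Nat.eqb i 0 then w q' else if Nat.ltb i (S q') then w (pred i) else w i).
  split; [|split].
  - intros i Hi. destruct (Nat.eqb i 0); [apply Hw; lia|].
    destruct (Nat.ltb_spec i (S q')); apply Hw; lia.
  - rewrite <- Hs. set (w' := fun i => if Nat.eqb i 0 then w q' else if Nat.ltb i (S q') then w (pred i) else w i).
    change (sumR (S (S q')) w') with (sumR (S q') w' + w' (S q')).
    change (sumR (S (S q')) w) with (sumR q' w + w q' + w (S q')).
    rewrite sumR_shift.
    assert (w' (S q') = w (S q')) as -> by (unfold w'; cbn [Nat.eqb]; rewrite Nat.ltb_irrefl; auto).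
    assert (w' 0%nat = w q') as -> by reflexivity.
    rewrite (sumR_ext q' _ w). lra.
    intros i Hi. unfold w'. cbn [Nat.eqb]. destruct (Nat.ltb_spec (S i) (S q')); [|lia]. reflexivity.
  - fold p.
    assert (KEY : forall f, Lin f -> Lin (fun u => f (rot (S q') 1 u)) ->
       f (rot (S q') 1 x) = f (sumV (S (S q')) (fun i => vscale
          (if Nat.eqb i 0 then w q' else if Nat.ltb i (S q') then w (pred i) else w i) (p i)))).
    { intros f Lf Lr. rewrite (lin_sum f) by auto.
      rewrite Hx. fold p. rewrite (lin_sum (fun u => f (rot (S q') 1 u))) by auto.
      apply reindex.
      + intros i Hi. rewrite P1 by auto. reflexivity.
      + rewrite P2. reflexivity.
      + rewrite P3. reflexivity. }
    apply pt_eq.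
    + apply KEY. apply Lin_px. apply (Lin_rx (S q') 1).
    + apply KEY. apply Lin_py. apply (Lin_ry (S q') 1).
    + apply KEY. apply Lin_pz. apply (Lin_rz (S q') 1).
Qed.

Fixpoint riter q j x := match j with O => x | S j' => rot q 1 (riter q j' x) end.

Lemma riter_rot q j x : (0 < q)%nat -> riter q j x = rot q j x.
Proof. intros Hq. induction j; cbn [riter]. symmetry; apply rot_zero.
  rewrite IHj. apply rot_comp; auto. Qed.

Lemma invariance q v0 a : (0 < q)%nat -> px a = 0 -> py a = 0 ->
  forall x, pyramid_set Hyperbolic q v0 a x <-> pyramid_set Hyperbolic q v0 a (rot q 1 x).
Proof. intros Hq Ha1 Ha2 x. split. apply fwd; auto.
  intros H. assert (forall j y, pyramid_set Hyperbolic q v0 a y -> pyramid_set Hyperbolic q v0 a (riter q j y)).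
  { induction j; intros; cbn [riter]; auto. apply fwd; auto. }
  specialize (H0 (pred q) _ H). rewrite riter_rot, rot_comp' in H0 by auto.
  replace (S (pred q)) with q in H0 by lia. rewrite rot_full in H0; auto. Qed.

Lemma lin_sumV f m g : Lin f -> f (sumV m g) = sumR m (fun i => f (g i)).
Proof. intros [H1 [H2 H3]]. induction m; cbn [sumV sumR]. auto. rewrite H2, IHm. auto. Qed.

Lemma sumR_scal m c f : sumR m (fun i => c * f i) = c * sumR m f.
Proof. induction m; cbn [sumR]. ring. rewrite IHm. ring. Qed.

Lemma basev_eq q r k : basev q (r,0,0) k = (r * cos (2*PI*INR k/INR q), r * sin (2*PI*INR k/INR q), 0).
Proof. unfold basev, rot. apply pt_eq; unfold px, py, pz; cbn [fst snd]; ring. Qed.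

Lemma cross_eq r h psi b :
  cross (vsub (r*cos(psi-b), r*sin(psi-b), 0) (0,0,h)) (vsub (r*cos(psi+b), r*sin(psi+b), 0) (0,0,h))
  = (2*h*r*sin b*cos psi, 2*h*r*sin b*sin psi, 2*r*r*sin b*cos b).
Proof. apply pt_eq; unfold cross, vsub, px, py, pz; cbn [fst snd];
  rewrite ?cos_plus, ?cos_minus, ?sin_plus, ?sin_minus; try ring.
  transitivity (2*r*r*sin b*cos b*(sin psi * sin psi + cos psi * cos psi)); [ring|].
  rewrite sc1; ring. Qed.

Lemma cos_b_pos q : (3 <= q)%nat -> 0 < cos (PI / INR q).
Proof. intros Hq. pose proof (INR_q_gt q Hq). pose proof PI_RGT_0. apply cos_gt_0.
  assert (0 < PI / INR q) by (apply Rdiv_lt_0_compat; lra). lra.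
  apply Rmult_lt_reg_r with (INR q). lra. unfold Rdiv. rewrite Rmult_assoc, Rinv_l by lra. nra. Qed.

Lemma side_normal_eq q r h k : (3 <= q)%nat -> 0 < r -> 0 < h ->
  side_normal q (r,0,0) (0,0,h) k =
  ((2*h*r*sin (PI/INR q)*cos (2*(PI/INR q)*INR k + PI/INR q),
    2*h*r*sin (PI/INR q)*sin (2*(PI/INR q)*INR k + PI/INR q),
    2*r*r*sin (PI/INR q)*cos (PI/INR q)),
   - (2*r*r*sin (PI/INR q)*cos (PI/INR q) * h)).
Proof. intros Hq Hr Hh. pose proof (INR_q_gt q Hq).
  set (b := PI / INR q). set (psi := 2*b*INR k + b).
  assert (E1 : basev q (r,0,0) k = (r*cos(psi-b), r*sin(psi-b), 0)).
  { rewrite basev_eq. replace (2*PI*INR k/INR q) with (psi - b) by (unfold psi, b; field; lra). reflexivity. }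
  assert (E2 : basev q (r,0,0) (S k) = (r*cos(psi+b), r*sin(psi+b), 0)).
  { rewrite basev_eq. replace (2*PI*INR (S k)/INR q) with (psi + b) by (unfold psi, b; rewrite S_INR; field; lra). reflexivity. }
  pose proof (sin_b_pos q Hq) as Hs. pose proof (cos_b_pos q Hq) as Hc. fold b in Hs, Hc.
  assert (Cx : px (centroid q (r,0,0) (0,0,h)) = 0).
  { unfold centroid. unfold vscale at 1. unfold px at 1. cbn [fst snd].
    rewrite (lin_sumV px) by apply Lin_px. cbn [sumR].
    rewrite (sumR_ext q _ (fun i => r * cos (2*PI*INR i/INR q))).
    rewrite sumR_scal, sum_cos0 by auto. unfold pyr_vertex. rewrite Nat.ltb_irrefl. unfold px; cbn; ring.
    intros i Hi. unfold pyr_vertex. destruct (Nat.ltb_spec i q); [|lia]. rewrite basev_eq. unfold px; cbn; auto. }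
  assert (Cy : py (centroid q (r,0,0) (0,0,h)) = 0).
  { unfold centroid. unfold vscale at 1. unfold py at 1. cbn [fst snd].
    rewrite (lin_sumV py) by apply Lin_py. cbn [sumR].
    rewrite (sumR_ext q _ (fun i => r * sin (2*PI*INR i/INR q))).
    rewrite sumR_scal, sum_sin0 by auto. unfold pyr_vertex. rewrite Nat.ltb_irrefl. unfold py; cbn; ring.
    intros i Hi. unfold pyr_vertex. destruct (Nat.ltb_spec i q); [|lia]. rewrite basev_eq. unfold py; cbn; auto. }
  assert (Cz : pz (centroid q (r,0,0) (0,0,h)) = / INR (S q) * h).
  { unfold centroid. unfold vscale at 1. unfold pz at 1. cbn [fst snd].
    rewrite (lin_sumV pz) by apply Lin_pz. cbn [sumR].
    rewrite (sumR_ext q _ (fun i => 0 * 0)).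
    rewrite sumR_scal. unfold pyr_vertex. rewrite Nat.ltb_irrefl. unfold pz; cbn; ring.
    intros i Hi. unfold pyr_vertex. destruct (Nat.ltb_spec i q); [|lia]. rewrite basev_eq. unfold pz; cbn; ring. }
  unfold side_normal. rewrite E1, E2, cross_eq.
  destruct (Rlt_dec _ _) as [Hl|Hl].
  - f_equal. apply pt_eq; unfold vscale, px, py, pz; cbn [fst snd]; ring.
    unfold dot, px, py, pz; cbn [fst snd]. ring.
  - exfalso. apply Hl. unfold dot. rewrite Cx, Cy, Cz. unfold px, py, pz; cbn [fst snd].
    assert (1 < INR (S q)) by (rewrite S_INR; lra).
    assert (/ INR (S q) < 1) by (rewrite <- Rinv_1; apply Rinv_lt_contravar; lra).
    assert (0 < 2*r*r*sin b*cos b*h) by (repeat apply Rmult_lt_0_compat; lra).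
    nra.
Qed.

Lemma formB_self m z0 h t : formB Hyperbolic ((m*cos t, m*sin t, z0), -(z0*h)) ((m*cos t, m*sin t, z0), -(z0*h))
  = m*m + z0*z0*(1-h*h).
Proof. unfold formB, curv, dot, px, py, pz; cbn [fst snd].
  transitivity (m*m*(sin t * sin t + cos t * cos t) + z0*z0*(1-h*h)); [ring|]. rewrite sc1; ring. Qed.

Lemma formB_adj m z0 h t u : formB Hyperbolic ((m*cos t, m*sin t, z0), -(z0*h)) ((m*cos (t+u), m*sin (t+u), z0), -(z0*h))
  = m*m*cos u + z0*z0*(1-h*h).
Proof. unfold formB, curv, dot, px, py, pz; cbn [fst snd]. rewrite cos_plus, sin_plus.
  transitivity (m*m*cos u*(sin t * sin t + cos t * cos t) + z0*z0*(1-h*h)); [ring|]. rewrite sc1; ring. Qed.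

Lemma cos_range q : (3 <= q)%nat -> -1 < cos (2*(PI/INR q)) < 1.
Proof. intros Hq. pose proof (sin_b_pos q Hq). pose proof (cos_b_pos q Hq). split.
  rewrite cos_2a_cos. nra. rewrite cos_2a_sin. nra. Qed.

Theorem mainTheorem10 (q n : nat) (hq : (3 <= q)%nat) (hn : (3 <= n)%nat) :
  exists (g : geom) (v0 a : pt), is_PY g q n v0 a.
Proof.
  pose proof (INR_q_gt q hq) as Iq. pose proof (INR_q_gt n hn) as In.
  set (b := PI / INR q).
  set (c := cos (2*b)). set (gm := cos (2*PI/INR n)).
  assert (Hc : -1 < c < 1) by (apply cos_range; auto).
  assert (Hg : -1 < gm < 1).
  { unfold gm. replace (2*PI/INR n) with (2*(PI/INR n)) by (field; lra). apply cos_range; auto. }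
  set (w := 2*(gm+c)/((1+gm)*(1+c))).
  assert (Hw1 : w < 1).
  { unfold w. apply Rmult_lt_reg_r with ((1+gm)*(1+c)). nra.
    unfold Rdiv. rewrite Rmult_assoc, Rinv_l by nra. nra. }
  assert (Hwe : w * ((1+gm)*(1+c)) = 2*(gm+c)) by (unfold w; field; lra).
  set (rho := (1 + Rmax 0 w)/2).
  assert (Hr0 : 0 < rho) by (unfold rho; pose proof (Rmax_l 0 w); lra).
  assert (Hr1 : rho < 1) by (unfold rho; assert (Rmax 0 w < 1) by (apply Rmax_lub_lt; lra); lra).
  assert (Hrw : w < rho) by (unfold rho; pose proof (Rmax_r 0 w); lra).
  set (H := rho / (rho - w)).
  assert (HH0 : 0 < H) by (unfold H; apply Rdiv_lt_0_compat; lra).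
  assert (HHe : H * (rho - w) = rho) by (unfold H; field; lra).
  set (r := sqrt rho). set (h := sqrt H).
  assert (Hr : 0 < r) by (apply sqrt_lt_R0; auto).
  assert (Hh : 0 < h) by (apply sqrt_lt_R0; auto).
  assert (Hrr : r * r = rho) by (apply sqrt_sqrt; lra).
  assert (Hhh : h * h = H) by (apply sqrt_sqrt; lra).
  exists Hyperbolic, (r,0,0), (0,0,h).
  unfold is_PY. split; [|split; [|split; [|split; [|split]]]].
  - unfold in_model, dot, px, py, pz; cbn [fst snd]. nra.
  - left. unfold px; cbn. lra.
  - unfold pz; cbn. lra.
  - intros E; congruence.
  - apply invariance; try lia; reflexivity.
  - intros k Hk. rewrite !side_normal_eq by auto. fold b.
    pose proof (sin_b_pos q hq) as Hs. pose proof (cos_b_pos q hq) as Hcb. fold b in Hs, Hcb.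
    set (psi := 2*b*INR k + b).
    replace (2*b*INR (S k) + b) with (psi + 2*b) by (unfold psi; rewrite S_INR; ring).
    unfold dihedral. rewrite !formB_self, formB_adj. fold c.
    set (sb := sin b). set (cb := cos b). fold sb cb in Hs, Hcb.
    assert (Hcb2 : cb * cb = (1+c)/2) by (unfold c, cb; rewrite cos_2a_cos; field).
    set (Y := H + rho*(cb*cb)*(1-H)).
    set (Z := H*c + rho*(cb*cb)*(1-H)).
    assert (He : cb*cb*w*(1+gm) = gm + c).
    { rewrite Hcb2. apply Rmult_eq_reg_r with (1+c); [|lra].
      transitivity ((w*((1+gm)*(1+c)))*(1+c)/2); [field|]. rewrite Hwe. field. }
    assert (EX : (2*h*r*sb)*(2*h*r*sb) + (2*r*r*sb*cb)*(2*r*r*sb*cb)*(1-h*h) = 4*rho*(sb*sb)*Y).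
    { unfold Y. transitivity (4*(r*r)*(sb*sb)*((h*h) + (r*r)*(cb*cb)*(1-h*h))); [ring|].
      rewrite Hrr, Hhh. ring. }
    assert (E12 : (2*h*r*sb)*(2*h*r*sb)*c + (2*r*r*sb*cb)*(2*r*r*sb*cb)*(1-h*h) = 4*rho*(sb*sb)*Z).
    { unfold Z. transitivity (4*(r*r)*(sb*sb)*((h*h)*c + (r*r)*(cb*cb)*(1-h*h))); [ring|].
      rewrite Hrr, Hhh. ring. }
    rewrite EX, E12.
    assert (HY : Y * (rho - w) = rho * (1 - cb*cb*w)).
    { unfold Y. transitivity (H*(rho-w) + rho*(cb*cb)*(rho - w - H*(rho-w))); [ring|].
      rewrite HHe. ring. }
    assert (HZ : Z * (rho - w) = rho * (c - cb*cb*w)).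
    { unfold Z. transitivity (H*(rho-w)*c + rho*(cb*cb)*(rho - w - H*(rho-w))); [ring|].
      rewrite HHe. ring. }
    assert (Hepos : 1 - cb*cb*w > 0).
    { apply Rmult_lt_reg_r with (1+gm). lra. nra. }
    assert (Ypos : 0 < Y).
    { apply Rmult_lt_reg_r with (rho - w). lra. rewrite HY. nra. }
    assert (Xpos : 0 < 4*rho*(sb*sb)*Y).
    { assert (0 < sb*sb) by nra. assert (0 < rho*Y) by nra. nra. }
    rewrite sqrt_square by lra.
    assert (Hval : - (4*rho*(sb*sb)*Z) / (4*rho*(sb*sb)*Y) = gm).
    { apply Rmult_eq_reg_r with (4*rho*(sb*sb)*Y); [|lra].
      unfold Rdiv. rewrite Rmult_assoc, Rinv_l by lra. rewrite Rmult_1_r.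
      apply Rmult_eq_reg_r with (rho - w); [|lra].
      transitivity (-(4*rho*(sb*sb))*(Z*(rho-w))); [ring|].
      transitivity (gm*(4*rho*(sb*sb))*(Y*(rho-w))); [|ring].
      rewrite HY, HZ. 
      transitivity (4*rho*(sb*sb)*rho*(cb*cb*w - c)); [ring|].
      transitivity (4*rho*(sb*sb)*rho*(gm - gm*(cb*cb*w))); [|ring].
      f_equal. nra. }
    rewrite Hval. unfold gm. apply acos_cos.
    pose proof PI_RGT_0. split.
    + apply Rlt_le, Rdiv_lt_0_compat; lra.
    + apply Rmult_le_reg_r with (INR n). lra. unfold Rdiv. rewrite Rmult_assoc, Rinv_l by lra. nra.
Qed.
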